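(* Let $G$ be a finite group with $G=P\rtimes F$, where $P$ is a cyclic normal $p$-subgroup for some prime $p$, $F$ is a subgroup with $|F|>1$ and $\gcd(p,|F|)=1$. Then: (1) each element of $F$ acts on $P$ (by conjugation) either trivially or fixed-point-freely (i.e. fixes only the identity of $P$); (2) if $x\in F$ has order $m$ and $u\in P$, then $m$ is the least positive integer such that $(ux)^m\in P$; (3) if $u\in P$ and $x\in C_F(P)$, then $o(ux)=o(u)o(x)$; (4) if $u\in P$ and $x\in F\setminus C_F(P)$, then $o(ux)=o(x)$; (5) with $Z=C_F(P)$, $$\psi(G)=\psi(P)\psi(Z)+|P|\,\psi(F\setminus Z)<\psi(P)\psi(Z)+|P|\,\psi(F),$$ where for a subset $S\subseteq G$ we write $\psi(S)=\sum_{s\in S}o(s)$.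
   Context: For a finite group $G$, $\psi(G)=\sum_{g\in G} o(g)$ denotes the sum of the orders of all elements of $G$; the same notation is used for subsets. $C_F(P)$ is the centralizer of $P$ in $F$. *)

(* Defs.v *)
From mathcomp Require Import all_boot all_fingroup all_solvable.
Set Implicit Arguments. Unset Strict Implicit. Unset Printing Implicit Defensive.
Local Open Scope group_scope.

Definition psi (gT : finGroupType) (S : {set gT}) : nat := (\sum_(g in S) #[g])%N.

(* Main.v *)
Require Import Defs.
From mathcomp Require Import all_boot all_fingroup all_solvable.
Local Open Scope group_scope.

Lemma cyc_meet (gT : finGroupType) (p : nat) (P H K : {group gT}) :
  cyclic P -> p.-group P -> prime p -> H \subset P -> K \subset P ->
  H :!=: 1 -> K :!=: 1 -> H :&: K \subset [1] -> False.
Proof.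
move=> cP pP pr_p sHP sKP ntH ntK sub1.
have ntP : P :!=: 1.
  apply/negP => /eqP P1; rewrite P1 in sHP; move/trivgP: sHP => H1.
  by rewrite H1 eqxx in ntH.
have oP := Ohm1_cyclic_pgroup_prime cP pP ntP.
have eq1 (L : {group gT}) : L \subset P -> L :!=: 1 -> 'Ohm_1(L) = 'Ohm_1(P).
  move=> sLP ntL; apply/eqP; rewrite eqEcard OhmS //=.
  by rewrite (Ohm1_cyclic_pgroup_prime (cyclicS sLP cP) (pgroupS sLP pP) ntL) oP.
have sO : 'Ohm_1(P) \subset H :&: K.
  by rewrite subsetI -{1}(eq1 H) // -(eq1 K) // !Ohm_sub.
have := subset_leq_card (subset_trans sO sub1).
by rewrite oP cards1 leqNgt prime_gt1.
Qed.

Theorem lemma2p2 (gT : finGroupType) (G P F : {group gT}) (p : nat) :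
  prime p -> p.-group P -> cyclic P -> P ><| F = G ->
  (1 < #|F|)%N -> coprime p #|F| ->
  (* (1) *)
  (forall x, x \in F ->
     (forall u, u \in P -> u ^ x = u) \/
     (forall u, u \in P -> u ^ x = u -> u = 1)) /\
  (* (2) *)
  (forall x u, x \in F -> u \in P ->
     (u * x) ^+ #[x] \in P /\
     (forall k, (0 < k < #[x])%N -> (u * x) ^+ k \notin P)) /\
  (* (3) *)
  (forall u x, u \in P -> x \in 'C_F(P) -> #[u * x] = (#[u] * #[x])%N) /\
  (* (4) *)
  (forall u x, u \in P -> x \in F :\: 'C_F(P) -> #[u * x] = #[x]) /\
  (* (5) *)
  (psi G = (psi P * psi 'C_F(P) + #|P| * psi (F :\: 'C_F(P)))%N /\
   (psi P * psi 'C_F(P) + #|P| * psi (F :\: 'C_F(P))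
      < psi P * psi 'C_F(P) + #|P| * psi F)%N).
Proof.
move=> pr_p pP cP defG ntF cpF.
have [nPG sFG defPF nPF tiPF] := sdprod_context defG.
have abP := cyclic_abelian cP.
have cop x : x \in F -> coprime #|P| #[x].
  move=> Fx; apply: (pnat_coprime pP).
  apply: pnat_dvd (order_dvdG Fx) _.
  by rewrite p'natE // -prime_coprime.
have part1 x : x \in F -> (forall u, u \in P -> u ^ x = u) \/
     (forall u, u \in P -> u ^ x = u -> u = 1).
  move=> Fx.
  have nPx : <[x]> \subset 'N(P) by rewrite cycle_subG (subsetP nPF).
  have TI := coprime_abel_cent_TI nPx (cop x Fx) abP.
  case: (eqVneq [~: P, <[x]>] 1) => [cPA | ntPA].
    left => u Pu.
    have : P \subset 'C(<[x]>) by apply/commG1P.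
    rewrite cent_cycle => /subsetP /(_ u Pu) /cent1P cux.
    by rewrite conjgE cux mulKg.
  right => u Pu ux.
  have CPu : u \in 'C_P(<[x]>).
    rewrite inE Pu cent_cycle; apply/cent1P.
    by rewrite /commute -{2}ux conjgE mulKVg.
  case: (eqVneq 'C_P(<[x]>) 1) => [C1 | ntC].
    by rewrite C1 in CPu; apply/set1P.
  exfalso; apply: (@cyc_meet gT p P [~: P, <[x]>]%G 'C_P(<[x]>)%G cP pP pr_p _ _ ntPA ntC).
  - by rewrite commg_subl.
  - exact: subsetIl.
  - by rewrite -TI setIS // subsetIr.
have decomp x u k : x \in F -> u \in P ->
    exists2 v, v \in P & (u * x) ^+ k = v * x ^+ k.
  move=> Fx Pu; elim: k => [|k [v Pv IH]].
    by exists 1; rewrite ?group1 ?expg0 ?mulg1.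
  exists (v * u ^ (x ^+ k)^-1).
    by rewrite groupM // memJ_norm // groupV groupX // (subsetP nPF).
  rewrite expgSr IH expgSr conjgE invgK !mulgA.
  by rewrite mulgVK.
have part2 x u : x \in F -> u \in P ->
     (u * x) ^+ #[x] \in P /\
     (forall k, (0 < k < #[x])%N -> (u * x) ^+ k \notin P).
  move=> Fx Pu; split.
    by have [v Pv ->] := decomp x u #[x] Fx Pu; rewrite expg_order mulg1.
  move=> k /andP [k0 kx]; have [v Pv ->] := decomp x u k Fx Pu.
  rewrite groupMl //; apply/negP => Pxk.
  have : x ^+ k \in P :&: F by rewrite inE Pxk groupX.
  rewrite tiPF => /set1P /eqP; rewrite -order_dvdn => /(dvdn_leq k0).
  by rewrite leqNgt kx.
have part3 u x : u \in P -> x \in 'C_F(P) -> #[u * x] = (#[u] * #[x])%N.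
  move=> Pu /setIP [Fx cPx].
  apply: orderM; first by apply/esym/(centP cPx).
  exact: coprime_dvdl (order_dvdG Pu) (cop x Fx).
have part4 u x : u \in P -> x \in F :\: 'C_F(P) -> #[u * x] = #[x].
  move=> Pu /setDP [Fx nCx].
  have fpf : forall w, w \in P -> w ^ x = w -> w = 1.
    case: (part1 x Fx) => // triv; exfalso.
    move/negP: nCx; apply; rewrite inE Fx; apply/centP => w Pw.
    by rewrite /commute -{1}(triv w Pw) conjgE mulKVg.
  have [Pm nP] := part2 x u Fx Pu.
  set y := u * x in Pm nP *.
  have ym1 : y ^+ #[x] = 1.
    apply: fpf => //.
    have : (y ^+ #[x]) ^ y = y ^+ #[x].
      by rewrite conjgE -expgSr expgS mulKg.
    rewrite /y conjgM; move: (y ^+ #[x]) Pm => w Pw.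
    have -> : w ^ u = w.
      by rewrite conjgE (centsP abP w Pw u Pu) mulKg.
    by [].
  apply/eqP; rewrite eqn_leq dvdn_leq ?order_gt0 ?order_dvdn ?ym1 //=.
  rewrite leqNgt; apply/negP => lt.
  by have := nP #[y]; rewrite order_gt0 lt expg_order group1 => /(_ isT).
have psiG : psi G = \sum_(u in P) \sum_(x in F) #[u * x].
  rewrite /psi -defPF /mulg /= /set_mulg curry_imset2X big_imset /=.
    rewrite (eq_bigl (fun q => (q.1 \in P) && (q.2 \in F))); last first.
      by move=> [a b]; rewrite inE.
    rewrite (pair_big (fun a => a \in P) (fun b => b \in F)) /=; apply: eq_bigr => -[a b] _.
    by [].
  move=> [a b] [c d] /setXP [Pa Fb] /setXP [Pc Fd] /= eq.
  have ebd : b = d by rewrite -(remgrMid tiPF Pa Fb) eq remgrMid.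
  by move: eq; rewrite ebd => /mulIg ->.
split; first exact: part1.
split; first exact: part2.
split; first exact: part3.
split; first exact: part4.
split.
  rewrite psiG /psi big_distrl /= -sum_nat_const -big_split /=.
  apply: eq_bigr => u Pu; rewrite (big_setID 'C_F(P)) /=.
  rewrite (setIidPr (subsetIl F 'C(P))) big_distrr /=.
  congr (_ + _); apply: eq_bigr => x Hx.
    exact: part3.
  exact: part4.
rewrite ltn_add2l ltn_pmul2l ?cardG_gt0 // /psi.
rewrite [X in (_ < X)%N](big_setID 'C_F(P)) /= -[X in (X < _)%N]add0n ltn_add2r.
rewrite (bigD1 1) /=; last by rewrite inE !group1.
by rewrite order1.
Qed.
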